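(* Let $(\Omega,\mathscr{A},\mu)$ be a finite measure space, let $P$ be a finite set, and let $\{A_p\}_{p\in P}\subseteq\mathscr{A}$ be a family of measurable sets. Let $\{B_1,B^*_1\},\{B_2,B^*_2\},\dots,\{B_k,B^*_k\}$ be pairs of subsets of $P$ such that for every $i\in\{1,\dots,k\}$ we have $B_i\cap B^*_i=\emptyset$ and $$\bigcap_{p\in B_i}A_p\subseteq\bigcup_{p\in B^*_i}A_p .$$ For $i\in\{1,\dots,k\}$ put $$\mathscr{B}_i=\{I\subseteq P:\ I\supseteq B_i,\ \text{and } I\not\supseteq B_j\setminus B^*_i \text{ for every } j<i\},$$ and $\mathscr{B}=\mathscr{B}_1\cup\mathscr{B}_2\cup\cdots\cup\mathscr{B}_k$. Then $$\mu\Big(\bigcap_{p\in P}\overline{A}_p\Big)=\sum_{I\in 2^P\setminus\mathscr{B}}(-1)^{|I|}\,\mu\Big(\bigcap_{i\in I}A_i\Big).$$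
   Context: $\overline{A}_p=\Omega\setminus A_p$ denotes the complement of $A_p$; $2^P$ denotes the power set of $P$; the intersection over the empty index set is $\Omega$. No ordering on $P$ is assumed; the pairs are indexed $1,\dots,k$ and the condition ''$j<i$'' refers to these indices. *)

(* Defs.v *)
From HB Require Import structures.
From mathcomp Require Import all_boot all_order all_algebra.
From mathcomp Require Import all_classical all_reals all_analysis.
Set Implicit Arguments. Unset Strict Implicit. Unset Printing Implicit Defensive.
Import Order.TTheory GRing.Theory Num.Theory.
Local Open Scope classical_set_scope.
Local Open Scope ring_scope.

(* intersection of the A p over p in the finite set I (= setT when I = set0) *)
Definition interA (T : Type) (P : finType) (A : P -> set T) (I : {set P}) : set T :=
  \bigcap_(p in [set p | p \in I]) A p.

Definition calBi (P : finType) (k : nat) (B Bs : 'I_k -> {set P}) (i : 'I_k)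
  : {set {set P}} :=
  [set I : {set P} | (B i \subset I) &&
     [forall j : 'I_k, (j < i)%N ==> ~~ ((B j :\: Bs i) \subset I)]].

Definition calB (P : finType) (k : nat) (B Bs : 'I_k -> {set P}) : {set {set P}} :=
  \bigcup_(i < k) calBi B Bs i.

(* Main.v *)
Require Import Defs.
From HB Require Import structures.
From mathcomp Require Import all_boot all_order all_algebra.
From mathcomp Require Import all_classical all_reals all_analysis.
From mathcomp Require Import lra.
Import Order.TTheory GRing.Theory Num.Theory.
Set Implicit Arguments. Unset Strict Implicit.
Local Open Scope ring_scope.

Section Tog.
Variable (P : finType) (q : P).
Definition tog (I : {set P}) := if q \in I then I :\ q else q |: I.

Lemma tog_inv I : tog (tog I) = I.
Proof.
rewrite /tog; case qI: (q \in I).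
  by rewrite setD11 finset.setD1K.
by rewrite setU11 finset.setU1K // qI.
Qed.

Lemma tog_sign (R : ringType) I : (-1) ^+ #|tog I| = - ((-1) ^+ #|I|) :> R.
Proof.
rewrite /tog; case: ifP => qI.
  by rewrite [in RHS](cardsD1 q I) qI exprS mulN1r opprK.
by rewrite cardsU1 qI exprS mulN1r.
Qed.

Lemma tog_sub (C I : {set P}) : q \notin C -> (C \subset tog I) = (C \subset I).
Proof.
move=> qC; rewrite /tog; case: ifP => qI.
  by rewrite subsetD1 qC andbT.
apply/idP/idP => H; last first.
  by apply: (fintype.subset_trans H); apply: subsetU1.
apply/fintype.subsetP => x xC; move/fintype.subsetP: H => /(_ x xC); rewrite in_setU1.
by case/orP => // /eqP ex; subst; rewrite xC in qC.
Qed.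

Lemma tog_sum (R : realType) (X : pred {set P}) :
  (forall I, X I -> X (tog I)) -> \sum_(I | X I) (-1) ^+ #|I| = 0 :> R.
Proof.
move=> HX.
have E : \sum_(I | X I) (-1) ^+ #|I| = \sum_(I | X I) (- (-1) ^+ #|I|) :> R.
  rewrite (reindex_inj (can_inj tog_inv)) /=.
  apply: eq_big => I; last by move=> _; rewrite tog_sign.
  apply/idP/idP; last exact: HX.
  by move=> /HX; rewrite tog_inv.
rewrite sumrN in E; lra.
Qed.
End Tog.

Lemma tog_subS (P : finType) (q : P) (S I : {set P}) :
  q \in S -> I \subset S -> tog q I \subset S.
Proof.
move=> qS IS; rewrite /tog; case: ifP => qI.
  by apply: (fintype.subset_trans _ IS); apply: subsetDl.
by rewrite finset.subUset finset.sub1set qS.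
Qed.

Lemma sum_all (R : realType) (P : finType) (S : {set P}) :
  \sum_(I : {set P} | I \subset S) (-1) ^+ #|I| = (S == finset.set0)%:R :> R.
Proof.
have [->|/set0Pn [q qS]] := eqVneq S finset.set0.
  rewrite (big_pred1 finset.set0); first by rewrite cards0 expr0.
  by move=> I; rewrite /= finset.subset0.
rewrite (tog_sum (q:=q)) //.
by move=> I; apply: tog_subS.
Qed.

Section CalB.
Variables (P : finType) (k : nat) (B Bs : 'I_k -> {set P}).
Hypothesis hdisj : forall i, B i :&: Bs i = finset.set0.

Lemma calBi_uniq I i j : I \in calBi B Bs i -> I \in calBi B Bs j -> i = j.
Proof.
have key : forall i j : 'I_k, (j < i)%N -> I \in calBi B Bs i -> I \in calBi B Bs j -> False.
  move=> i0 j0 lt; rewrite /calBi !inE => /andP[_ /forallP /(_ j0)].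
  rewrite lt /= => /negP H /andP[Bj _]; apply: H.
  exact: fintype.subset_trans (subsetDl _ _) Bj.
move=> Hi Hj; case: (ltngtP i j) => [lt|lt|/val_inj //].
  by case: (key _ _ lt Hj Hi).
by case: (key _ _ lt Hi Hj).
Qed.

Lemma sum_calBi (R : realType) (S : {set P}) i :
  (B i \subset S -> exists2 q, q \in Bs i & q \in S) ->
  \sum_(I : {set P} | (I \subset S) && (I \in calBi B Bs i)) (-1) ^+ #|I| = 0 :> R.
Proof.
move=> Hr; case BS: (B i \subset S); last first.
  apply: big_pred0 => I; apply/negP => /andP[IS].
  rewrite /calBi inE => /andP[BI _].
  by rewrite (fintype.subset_trans BI IS) in BS.
case: (Hr BS) => q qBs qS.
have qB : q \notin B i.
  apply/negP => qB; have : q \in B i :&: Bs i by rewrite inE qB qBs.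
  by rewrite hdisj inE.
apply: (tog_sum (q:=q)) => I /andP[IS]; rewrite /calBi !inE => /andP[BI /forallP HI].
rewrite tog_subS // tog_sub // BI /=; apply/forallP => j.
rewrite tog_sub ?HI //.
by rewrite inE qBs.
Qed.

Lemma sum_calB (R : realType) (S : {set P}) :
  (forall i, B i \subset S -> exists2 q, q \in Bs i & q \in S) ->
  \sum_(I : {set P} | (I \subset S) && (I \in calB B Bs)) (-1) ^+ #|I| = 0 :> R.
Proof.
move=> Hr.
transitivity (\sum_(I : {set P} | I \subset S) \sum_(i | I \in calBi B Bs i) (-1) ^+ #|I| : R).
  rewrite [RHS](bigID (fun I => I \in calB B Bs)) /=.
  rewrite [X in _ = _ + X]big1 ?addr0; last first.
    move=> I /andP[_ nI]; apply: big_pred0 => i; apply/negP => Ii.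
    by move/negP: nI; apply; apply/bigcupP; exists i.
  apply: eq_bigr => I /andP[_ /bigcupP [i _ Ii]].
  by rewrite (big_pred1 i) // => j; apply/idP/eqP => [Ij|->] //; exact: calBi_uniq Ij Ii.
rewrite (exchange_big_dep xpredT) //=.
by rewrite big1 // => i _; apply: sum_calBi; apply: Hr.
Qed.

Lemma comb (R : realType) (S : {set P}) :
  (forall i, B i \subset S -> exists2 q, q \in Bs i & q \in S) ->
  \sum_(I in ~: calB B Bs | I \subset S) (-1) ^+ #|I| = (S == finset.set0)%:R :> R.
Proof.
move=> Hr; rewrite -(sum_all R S) [RHS](bigID (fun I => I \in calB B Bs)) /=.
rewrite sum_calB // add0r; apply: eq_bigl => I; by rewrite inE andbC.
Qed.
End CalB.
Local Open Scope classical_set_scope.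
Section Meas.
Variables (d : measure_display) (T : measurableType d) (R : realType)
  (mu : {finite_measure set T -> \bar R}).

Lemma mu_seq (I : choiceType) (r : seq I) (F : I -> set T) :
  uniq r -> (forall i, measurable (F i)) ->
  (forall i j, i != j -> F i `&` F j = set0) ->
  mu (\big[setU/set0]_(i <- r) F i) = (\sum_(i <- r) mu (F i))%E.
Proof.
move=> + mF hD; elim: r => [|a r IH]; first by rewrite !big_nil measure0.
rewrite /= => /andP[ar ur]; rewrite !big_cons measureU //.
- by congr (_ + _); apply: IH.
- by apply: bigsetU_measurable => i _; apply: mF.
rewrite -bigcup_seq setI_bigcupr; apply: bigcup0 => t /= tr; apply: hD.
by apply/negP => /eqP eat; subst; rewrite tr in ar.
Qed.

Variables (P : finType) (A : P -> set T) (mA : forall p, measurable (A p)).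

Definition E (S : {set P}) : set T :=
  \bigcap_(p in [set: P]) (if p \in S then A p else ~` A p).

Definition Sx (x : T) : {set P} := [set p | `[< A p x >]].

Lemma mE S : measurable (E S).
Proof.
apply: fin_bigcap_measurable; first exact: finite_finset.
by move=> p _; case: ifP => _; [apply: mA | apply: measurableC].
Qed.

Lemma memE S x : E S x <-> S = Sx x.
Proof.
split.
  move=> H; apply/setP => p; rewrite inE; have := H p I.
  by case: ifP => _ h; apply/esym; [apply/asboolP | apply/asboolP].
move=> -> p _; rewrite inE; case: asboolP => //.
Qed.

Lemma partition X : measurable X ->
  mu X = (\sum_(S : {set P}) mu (X `&` E S))%E.
Proof.
move=> mX.
have XE : X = \big[setU/set0]_(S <- index_enum {set P}) (X `&` E S).
  rewrite -bigcup_seq; apply/seteqP; split => [x Xx|x [S _ [Xx _]] //].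
  exists (Sx x); first exact: mem_index_enum.
  by split => //; apply/memE.
rewrite {1}XE mu_seq ?index_enum_uniq //.
  by move=> S; apply: measurableI => //; apply: mE.
move=> S S' nS; apply/seteqP; split => // x [[_ /memE e1] [_ /memE e2]].
by move/eqP: nS; apply; rewrite e1 e2.
Qed.

End Meas.

Unset Implicit Arguments. Set Strict Implicit.
Local Open Scope ring_scope.
Theorem theorem2 (d : measure_display) (T : measurableType d) (R : realType)
  (mu : {finite_measure set T -> \bar R})
  (P : finType) (A : P -> set T) (mA : forall p, measurable (A p))
  (k : nat) (B Bs : 'I_k -> {set P})
  (hdisj : forall i, B i :&: Bs i = finset.set0)
  (hsub : forall i, interA A (B i) `<=` \bigcup_(p in [set p | p \in Bs i]) A p) :
  mu (\bigcap_(p in [set: P]) ~` A p) =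
  (\sum_(I in ~: calB B Bs) ((-1) ^+ #|I|)%:E * mu (interA A I))%E.
Proof.
set C := \bigcap_(p in [set: P]) ~` A p.
have mC : measurable C.
  by apply: fin_bigcap_measurable; [exact: finite_finset| move=> p _; apply: measurableC].
have mI I : measurable (interA A I).
  by apply: fin_bigcap_measurable; [exact: finite_finset| move=> p _].
pose m S := fine (mu (E A S)).
have hm S : mu (E A S) = (m S)%:E by rewrite fineK // fin_num_measure //; exact: mE.
have hC S : C `&` E A S = if S == finset.set0 then E A S else set0.
  case: eqP => [->|/eqP /set0Pn [p pS]]; apply/seteqP; split => x //.
  - by case.
  - move=> Ex; split => // q _; have := Ex q I; rewrite inE //.
  - case=> Cx Ex; have := Ex p I; rewrite pS => Apx.
    by have := Cx p I.
have hI J S : interA A J `&` E A S = if J \subset S then E A S else set0.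
  case: ifP => [IS|/negbT /fintype.subsetPn [p pI pS]]; apply/seteqP; split => x //.
  - by case.
  - move=> Ex; split => // q /= qI; have := Ex q I.
    by rewrite (fintype.subsetP IS q qI).
  - case=> Ix Ex; have := Ex p I; rewrite (negbTE pS) => nApx.
    by apply: nApx; apply: Ix.
transitivity ((\sum_(S : {set P}) (if S == finset.set0 then m S else 0))%:E).
  rewrite (partition mu mA mC) -sumEFin; apply: eq_bigr => S _.
  by rewrite hC; case: ifP => _; [rewrite hm | rewrite measure0].
transitivity (\sum_(I in ~: calB B Bs) ((-1) ^+ #|I|)%:E *
   (\sum_(S : {set P}) (if I \subset S then m S else 0))%:E)%E; last first.
  apply: eq_bigr => I _; congr (_ * _)%E.
  rewrite (partition mu mA (mI I)) -sumEFin; apply: eq_bigr => S _.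
  by rewrite hI; case: ifP => _; [rewrite hm | rewrite measure0].
under [RHS]eq_bigr do rewrite -EFinM.
rewrite sumEFin; congr EFin.
under [RHS]eq_bigr do rewrite big_distrr.
rewrite [RHS]exchange_big /=; apply: eq_bigr => S _.
transitivity (\sum_(I in ~: calB B Bs | I \subset S) (-1) ^+ #|I| * m S); last first.
  by rewrite big_mkcondr; apply: eq_bigr => I _; case: ifP => _; rewrite ?mulr0.
rewrite -mulr_suml.
have [E0|/set0P [x Ex]] := eqVneq (E A S) set0.
  by rewrite /m E0 measure0 /= mulr0; case: ifP.
rewrite comb //; first by case: ifP => _; rewrite ?mul1r ?mul0r.
move/memE: Ex => -> i BS.
have : interA A (B i) x.
  move=> p /= pB; move/fintype.subsetP: BS => /(_ p pB); rewrite inE.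
  by move/asboolP.
move/hsub => [p /= pBs Apx]; exists p => //; rewrite inE; exact/asboolP.
Qed.
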